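(* Let $n$ be odd, let $\Gamma=\mathrm{Cay}(\mathrm{D}_{2n},S)$ be a Cayley digraph of the dihedral group $\mathrm{D}_{2n}$ of order $2n$, let $A=\mathrm{Aut}(\Gamma)$, and let $A_1$ be the stabilizer in $A$ of the vertex $1$ (the identity element). If $\gcd(|A_1|,n)=1$, then $\Gamma$ is a CI-digraph. Moreover, if $\Gamma$ is connected and $|S|<p$, where $p$ is the least prime divisor of $n$, then $\Gamma$ is a CI-digraph.
   Context: For a group $G$ and a subset $S\subseteq G$ with $1\notin S$, the Cayley digraph $\mathrm{Cay}(G,S)$ has vertex set $G$ and arc set $\{(g,sg)\mid g\in G,\ s\in S\}$; it is connected exactly when $\langle S\rangle=G$. $\mathrm{Cay}(G,S)$ is a CI-digraph if for every $T\subseteq G$ with $1\notin T$ and $\mathrm{Cay}(G,T)\cong\mathrm{Cay}(G,S)$ there is $\alpha\in\mathrm{Aut}(G)$ with $S^\alpha=T$. *)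

(* Defs.v *)
From mathcomp Require Import all_boot all_fingroup all_solvable.
Set Implicit Arguments. Unset Strict Implicit. Unset Printing Implicit Defensive.
Local Open Scope group_scope.

Section Cayley.
Variable gT : finGroupType.

(* Arc relation of Cay(G,S), G = [set: gT]: arcs are (g, s g) for s in S,
   i.e. (g, h) is an arc iff h * g^-1 \in S. *)
Definition cay_arc (S : {set gT}) : rel gT := fun g h => h * g^-1 \in S.

Definition cay_aut (S : {set gT}) : {set {perm gT}} :=
  [set f : {perm gT} | [forall g, forall h, cay_arc S (f g) (f h) == cay_arc S g h]].

Definition cay_stab (S : {set gT}) : {set {perm gT}} :=
  [set f in cay_aut S | f 1 == 1].

Definition cay_iso (S T : {set gT}) : Prop :=
  exists f : {perm gT}, forall g h, cay_arc T (f g) (f h) = cay_arc S g h.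

Definition CI_digraph (S : {set gT}) : Prop :=
  forall T : {set gT}, 1 \notin T -> cay_iso S T ->
    exists2 a : {perm gT}, a \in Aut [set: gT] & a @: S = T.

Definition cay_connected (S : {set gT}) : Prop := <<S>> = [set: gT].
End Cayley.

(* Main.v *)
Require Import Defs.
From mathcomp Require Import all_boot all_fingroup all_solvable.
Set Implicit Arguments. Unset Strict Implicit. Unset Printing Implicit Defensive.
Open Scope group_scope.

Lemma hall_abelian_conj (gT : finGroupType) pi (G H K : {group gT}) :
  abelian H -> abelian K -> pi.-Hall(G) H -> pi.-Hall(G) K ->
  exists2 g, g \in G & K :=: H :^ g.
Proof.
move: {2}#|G| (leqnn #|G|) => m; elim: m G H K => [|m IH] G H K.
  by rewrite leqNgt cardG_gt0.
move=> leGm aH aK hH hK.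
have sHG := pHall_sub hH; have sKG := pHall_sub hK.
case: (pickP (fun p : 'I_#|G|.+1 => (nat_of_ord p \in pi) && ~~ ('O_p(H) <| G))).
  move=> [p ltp] /= /andP[pi_p nnP]; clear ltp.
  set P := 'O_p(H)%G.
  have sylPH : p.-Sylow(H) P by apply: nilpotent_pcore_Hall; apply: abelian_nil.
  have sylQK : p.-Sylow(K) 'O_p(K)%G by apply: nilpotent_pcore_Hall; apply: abelian_nil.
  have sylP := subHall_Sylow hH pi_p sylPH.
  have sylQ := subHall_Sylow hK pi_p sylQK.
  have [x Gx defQ] := Sylow_trans sylP sylQ.
  set K1 := (K :^ x^-1)%G.
  have defP : 'O_p(K1) = P.
    by rewrite /K1 /= pcoreJ /= defQ -conjsgM mulgV conjsg1.
  set N := 'N_G(P)%G.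
  have sHN : H \subset N.
    by rewrite subsetI sHG normal_norm // pcore_normal.
  have sK1N : K1 \subset N.
    rewrite subsetI -defP normal_norm ?pcore_normal // andbT.
    by rewrite /K1 /= sub_conjgV conjGid // groupV.
  have ltNG : #|N| < #|G|.
    apply: proper_card; rewrite properEneq subsetIl andbT.
    apply: contra nnP => /eqP eNG.
    rewrite /normal (subset_trans (pcore_sub _ _) sHG) /=.
    by rewrite -eNG subsetIr.
  have hHN : pi.-Hall(N) H by apply: pHall_subl hH => //; apply: subsetIl.
  have hK1 : pi.-Hall(G) K1 by rewrite /K1 pHallJ ?groupV.
  have hK1N : pi.-Hall(N) K1 by apply: pHall_subl hK1 => //; apply: subsetIl.
  have aK1 : abelian K1 by rewrite /K1 /= abelianJ.
  have leNm : #|N| <= m by rewrite -ltnS (leq_trans ltNG).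
  have [g Ng defK1] := IH N H K1 leNm aH aK1 hHN hK1N.
  exists (g * x); first by rewrite groupM //; case/setIP: Ng.
  by rewrite conjsgM -defK1 /K1 /= -conjsgM mulVg conjsg1.
move=> allN; exists 1; first exact: group1.
rewrite conjsg1; apply/esym/eqP; rewrite eqEcard (card_Hall hH) (card_Hall hK) leqnn andbT.
apply/subsetP=> x Hx; rewrite -(prod_constt x) big_nat; apply: group_prod => p /andP[_ ltpx].
have xpH : x.`_p \in H by apply: groupX.
case pi_p: (p \in pi); last first.
  suff -> : x.`_p = 1 by apply: group1.
  apply/constt1P; apply: sub_p_elt (mem_p_elt (pHall_pgroup hH) Hx).
  by move=> q /=; rewrite inE /=; apply: contraTN => /eqnP->; rewrite pi_p.
have ltp : p < #|G|.+1.
  apply: leq_trans ltpx _; rewrite ltnS dvdn_leq ?cardG_gt0 //.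
  by apply: order_dvdG; apply: (subsetP sHG).
have := allN (Ordinal ltp); rewrite /= pi_p /= => /negbFE nPG.
have sylPH : p.-Sylow(H) 'O_p(H)%G by apply: nilpotent_pcore_Hall; apply: abelian_nil.
have sylQK : p.-Sylow(K) 'O_p(K)%G by apply: nilpotent_pcore_Hall; apply: abelian_nil.
have sylQ := subHall_Sylow hK pi_p sylQK.
have xpP : x.`_p \in 'O_p(H).
  by rewrite (mem_normal_Hall sylPH (pcore_normal _ _) xpH) p_elt_constt.
apply: (subsetP (pcore_sub p K)); apply: (subsetP (pcore_sub_Hall sylQ)).
exact: (subsetP (pcore_max (pcore_pgroup _ _) nPG)).
Qed.


Section Cay.
Variable gT : finGroupType.

Lemma cay_autP (S : {set gT}) (f : {perm gT}) :
  reflect (forall g h, cay_arc S (f g) (f h) = cay_arc S g h) (f \in cay_aut S).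
Proof.
rewrite inE; apply: (iffP forallP) => [H g h | H g].
  by apply/eqP; move/forallP: (H g) => /(_ h).
by apply/forallP => h; rewrite H.
Qed.

Lemma cay_aut_group (S : {set gT}) : group_set (cay_aut S).
Proof.
apply/group_setP; split.
  by apply/cay_autP => g h; rewrite !perm1.
move=> f1 f2 /cay_autP H1 /cay_autP H2; apply/cay_autP => g h.
by rewrite !permM H2 H1.
Qed.

Canonical cay_aut_grp (S : {set gT}) := Group (cay_aut_group S).

Definition rho (x : gT) : {perm gT} := perm (@mulIg gT x).

Lemma rhoE x g : rho x g = g * x.
Proof. by rewrite permE. Qed.

Lemma rhoM : {in [set: gT] &, {morph rho : a b / a * b}}.
Proof. by move=> a b _ _; apply/permP => g; rewrite permM !rhoE mulgA. Qed.

Canonical rho_morphism := Morphism rhoM.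

Lemma injm_rho : 'injm rho.
Proof.
apply/injmP => a b _ _ /permP /(_ 1); rewrite !rhoE !mul1g //.
Qed.

Lemma rho_aut (S : {set gT}) x : rho x \in cay_aut S.
Proof.
apply/cay_autP => g h; rewrite /cay_arc !rhoE invMg mulgA mulgK //.
Qed.

Definition Ghat := rho @* [set: gT].

Lemma Ghat_sub (S : {set gT}) : Ghat \subset cay_aut S.
Proof.
apply/subsetP => z /morphimP[x _ _ ->]; exact: rho_aut.
Qed.

Lemma memGhat z : (z \in Ghat) = (z == rho (z 1)).
Proof.
apply/idP/eqP => [/morphimP[x _ _ ->] | ->]; first by rewrite rhoE mul1g.
by rewrite mem_morphim ?inE.
Qed.

Lemma babai (S : {set gT}) :
  (forall c : {perm gT}, Ghat :^ c \subset cay_aut S ->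
     exists2 b, b \in cay_aut S & (Ghat :^ c) :^ b = Ghat) -> CI_digraph S.
Proof.
move=> hyp T _ [f hf].
have sub1 : Ghat :^ f^-1 \subset cay_aut S.
  apply/subsetP => z; rewrite mem_conjg invgK => /morphimP[c _ _ ezc].
  have -> : z = f * rho c * f^-1 by rewrite -ezc /conjg !mulgA mulgV mul1g mulgK.
  apply/cay_autP => g h.
  have hfi : forall a b, cay_arc S (f^-1 a) (f^-1 b) = cay_arc T a b.
    by move=> a b; rewrite -hf !permKV.
  by rewrite !permM hfi (cay_autP _ _ (rho_aut T c)) hf.
have [b Ab eqb] := hyp _ sub1.
pose phi := b^-1 * f.
have ephi : Ghat :^ phi = Ghat.
  rewrite conjsgM; apply/(canLR (conjsgKV f)).
  by rewrite -{1}eqb conjsgK.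
pose psi := phi * rho (phi 1)^-1.
have psi1 : psi 1 = 1 by rewrite permM rhoE mulgV.
have epsi : Ghat :^ psi = Ghat.
  by rewrite conjsgM ephi conjGid // mem_morphim ?inE.
have Abi : b^-1 \in cay_aut S by rewrite groupV.
have hpsi : forall g h, cay_arc T (psi g) (psi h) = cay_arc S g h.
  move=> g h; rewrite !permM (cay_autP _ _ (rho_aut T _)) hf.
  exact: (cay_autP _ _ Abi).
clearbody psi.
have psiM : {in [set: gT] &, {morph psi : x y / x * y}}.
  move=> x y _ _.
  have : rho y ^ psi \in Ghat by rewrite -epsi memJ_conjg mem_morphim ?inE.
  rewrite memGhat => /eqP e.
  have ev : forall v, psi (psi^-1 v * y) = v * psi y.
    move=> v; move/permP: e => /(_ v).
    rewrite /conjg !permM rhoE => ->.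
    by rewrite !rhoE -{1}psi1 permK mul1g.
  by rewrite -ev permK.
have psiA : psi \in Aut [set: gT].
  by rewrite inE; apply/andP; split; [apply/subsetP => ? _; rewrite inE | apply/morphicP].
exists psi => //; apply/setP => w; apply/imsetP/idP.
  case=> s Ss ->.
  by have := hpsi 1 s; rewrite psi1 /cay_arc !invg1 !mulg1 Ss => ->.
move=> Tw; exists (psi^-1 w); last by rewrite permKV.
by have := hpsi 1 (psi^-1 w); rewrite psi1 permKV /cay_arc !invg1 !mulg1 Tw => <-.
Qed.

End Cay.


Section Core.
Variable gT : finGroupType.
Variables (S : {set gT}) (C0 : {group gT}) (n : nat).
Hypotheses (hC0 : #|C0| = n) (oddn : odd n) (aC0 : abelian C0)
  (hG : #|[set: gT]| = n.*2)
  (hinv : forall z c, z \notin C0 -> c \in C0 -> c ^ z = c^-1)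
  (hcos : forall u w, u \notin C0 -> w \notin C0 -> u^-1 * w \in C0)
  (hcop : coprime #|cay_stab S| n).

Let A := cay_aut_grp S.

Lemma stabE : cay_stab S = 'C_A[1 | 'P].
Proof. by apply/setP => f; rewrite !inE /= sub1set inE apermE. Qed.

Lemma cardA : #|A| = (n.*2 * #|cay_stab S|)%N.
Proof.
have oT : orbit 'P A 1 = [set: gT].
  apply/setP => v; rewrite inE; apply/orbitP; exists (rho v).
    exact: rho_aut.
  by rewrite /= apermE rhoE mul1g.
by rewrite -(card_orbit_stab 'P A 1) stabE oT hG.
Qed.

Let pi := \pi(n).

Lemma n_gt0 : 0 < n.
Proof. by rewrite -hC0 cardG_gt0. Qed.

Lemma hall_n (K : {group {perm gT}}) : K \subset A -> #|K| = n -> pi.-Hall(A) K.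
Proof.
move=> sKA cK; rewrite /pHall sKA /pgroup cK pnat_pi ?n_gt0 //= -divgS // cK cardA.
rewrite -mul2n mulnAC mulnK ?n_gt0 // -coprime_pi' ?n_gt0 //.
  by rewrite coprimeMr coprimen2 oddn /= coprime_sym hcop.
by rewrite muln_gt0 /= stabE cardG_gt0.
Qed.

Definition Cr := (rho_morphism gT @* C0)%G.

Lemma card_Cr : #|Cr| = n.
Proof. by rewrite card_injm ?injm_rho ?subsetT. Qed.

Lemma Cr_sub_Ghat : Cr \subset Ghat gT.
Proof. by apply: morphimS; apply: subsetT. Qed.

Lemma core (c : {perm gT}) : Ghat gT :^ c \subset A ->
  exists2 b, b \in A & (Ghat gT :^ c) :^ b = Ghat gT.
Proof.
move=> sHA.
have sCA : Cr \subset A by apply: subset_trans Cr_sub_Ghat (Ghat_sub S).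
have hC := hall_n sCA card_Cr.
have sC'A : Cr :^ c \subset A.
  by apply: subset_trans sHA; rewrite conjSg Cr_sub_Ghat.
have hC' := hall_n sC'A (etrans (cardJg _ _) card_Cr).
have aCr : abelian Cr by apply: morphim_abelian.
have aCr' : abelian (Cr :^ c)%G by rewrite /= abelianJ.
have [g Ag eg] := hall_abelian_conj aCr aCr' hC hC'.
pose gam := c * g^-1.
have eC : Cr :^ gam = Cr by rewrite conjsgM /= eg conjsgK.
exists g^-1; first by rewrite groupV.
rewrite -conjsgM -/gam.
have sH1A : Ghat gT :^ gam \subset A.
  by rewrite conjsgM -(conjGid (groupVr Ag)) conjSg.
clearbody gam.
apply/eqP; rewrite eq_sym eqEcard cardJg leqnn andbT.
apply/subsetP => z /morphimP[v _ _ ->].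
case Cv: (v \in C0).
  have : rho v \in Cr :^ gam by rewrite eC mem_morphim ?inE.
  by apply/subsetP; rewrite conjSg Cr_sub_Ghat.
have nCv : v \notin C0 by rewrite Cv.
pose w := (gam^-1 1)^-1 * gam^-1 v.
pose t := rho w ^ gam.
have tH1 : t \in Ghat gT :^ gam by rewrite memJ_conjg mem_morphim ?inE.
have t1 : t 1 = v by rewrite /t /conjg !permM rhoE mulKVg permKV.
pose k := t * (rho v)^-1.
have kA : k \in A by rewrite groupM ?groupV ?rho_aut // (subsetP sH1A).
have k1 : k 1 = 1.
  by rewrite permM t1; apply: (canLR (permK (rho v))); rewrite rhoE mul1g.
have kstab : k \in 'C_A[1 | 'P] by rewrite -stabE /cay_stab inE kA k1 eqxx.
have rhoCr : forall e, e \in C0 -> rho e \in Cr.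
  by move=> e Ce; rewrite mem_morphim ?inE.
have nCw : w \notin C0.
  apply/negP => Cw; have : t \in Cr by rewrite -eC memJ_conjg rhoCr.
  case/morphimP => e _ Ce et.
  by move: nCv; rewrite -t1 et rhoE mul1g Ce.
have kC : forall e, e \in C0 -> rho e ^ k = rho e.
  move=> e Ce.
  have : rho e ^ gam^-1 \in Cr by rewrite -mem_conjg eC rhoCr.
  case/morphimP => e' _ Ce' ee'.
  have ree : rho e = rho e' ^ gam by rewrite -ee' conjgKV.
  have et : rho e ^ t = (rho e)^-1.
    have eg2 : gam * rho w ^ gam = rho w * gam by rewrite /conjg !mulgA mulgV mul1g.
    rewrite ree /t -!conjgM eg2 conjgM -morphJ ?inE //.
    by rewrite hinv // morphV ?inE // conjVg.
  have ev : rho e ^ (rho v)^-1 = (rho e)^-1.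
    rewrite -morphV ?inE // -morphJ ?inE // hinv ?morphV ?inE //.
    by rewrite groupV.
  by rewrite /k conjgM et conjVg ev invgK.
have kfix : forall e, e \in C0 -> k e = e.
  move=> e Ce.
  have cm : rho e * k = k * rho e by rewrite conjgC kC.
  by rewrite -{1}(mul1g e) -rhoE -permM cm permM k1 rhoE mul1g.
pose d := v^-1 * k v.
have nCkv : k v \notin C0.
  apply/negP => Ckv; move: nCv; rewrite -(perm_inj (kfix _ Ckv)) => /negP; apply.
  by [].
have dC : d \in C0 by apply: hcos.
have kv : k v = v * d by rewrite /d mulKVg.
clearbody d.
have kout : forall u, u \notin C0 -> k u = u * d.
  move=> u nCu.
  have [e Ce ->] : exists2 e, e \in C0 & u = v * e.
    by exists (v^-1 * u); [apply: hcos | rewrite mulKVg].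
  have cm : rho e * k = k * rho e by rewrite conjgC kC.
  have cde : commute e d by apply: (centsP aC0).
  have step : k (v * e) = k v * e.
    by rewrite -[v * e]rhoE -permM cm permM rhoE.
  by rewrite step kv -!mulgA cde.
have kpow : forall j u, (k ^+ j) u = if u \in C0 then u else u * d ^+ j.
  elim => [|j IH] u; first by rewrite expg0 perm1 expg0 mulg1; case: ifP.
  rewrite expgSr permM IH; case: ifP => [Cu | nCu]; first exact: kfix.
  rewrite kout; first by rewrite expgSr mulgA.
  by rewrite groupMr ?groupX ?nCu.
have kn : k ^+ n = 1.
  apply/permP => u; rewrite kpow perm1 -hC0 expg_cardG // mulg1.
  by case: ifP.
have ok : #[k] = 1%N.
  apply/eqP; rewrite -dvdn1 -(eqnP hcop) dvdn_gcd; apply/andP; split.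
    by rewrite stabE order_dvdG.
  by rewrite order_dvdn kn.
move/eqP: ok; rewrite order_eq1 /k -eq_mulgV1 => /eqP e.
by move: tH1; rewrite e.
Qed.

End Core.


Lemma stabE' (gT : finGroupType) (S : {set gT}) :
  cay_stab S = 'C_(cay_aut_grp S)[1 | 'P].
Proof. by apply/setP => f; rewrite !inE /= sub1set inE apermE. Qed.

Lemma conn_coprime (gT : finGroupType) (S : {set gT}) n : 0 < n ->
  cay_connected S -> (forall q, prime q -> q %| n -> #|S| < q) ->
  coprime #|cay_stab S| n.
Proof.
move=> n0 conn hq.
apply/negPn/negP => ncop.
have g1 : 1 < gcdn #|cay_stab S| n.
  rewrite ltn_neqAle eq_sym ncop /= gcdn_gt0 n0 orbT //.
pose q := pdiv (gcdn #|cay_stab S| n).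
have pq : prime q by apply: pdiv_prime.
have qd : q %| gcdn #|cay_stab S| n by apply: pdiv_dvd.
rewrite dvdn_gcd in qd; case/andP: qd => qA qn.
rewrite stabE' in qA.
have [k kC ok] := Cauchy pq qA.
case/setIP: kC => kA /astab1P; rewrite /= apermE => k1.
have kaut := cay_autP _ _ kA.
have closed : forall v s, k v = v -> s \in S -> k (s * v) = s * v.
  move=> v s kv Ss.
  have inX : forall w, w \in S :* v -> k w \in S :* v.
    by move=> w; rewrite !mem_rcoset -[_ * v^-1 \in S]/(cay_arc S v _) -kaut kv.
  have sub : orbit 'P <[k]> (s * v) \subset S :* v.
    apply/subsetP => w /orbitP [g /cycleP [i ->] <-] /=.
    rewrite apermE; elim: i => [|i IH]; first by rewrite expg0 perm1 mem_rcoset mulgK.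
    by rewrite expgSr permM inX.
  have dq : #|orbit 'P <[k]> (s * v)| %| q.
    by rewrite card_orbit -ok orderE dvdn_indexg.
  have : #|orbit 'P <[k]> (s * v)| = 1%N.
    case: (eqVneq #|orbit 'P <[k]> (s * v)| 1%N) => // ne1.
    have := prime_nt_dvdP pq ne1 dq => eq.
    have := subset_leq_card sub; rewrite card_rcoset eq.
    by rewrite leqNgt hq.
  move/card_orbit1 => o1.
  have := mem_orbit 'P (s * v) (cycle_id k); rewrite o1 inE /= apermE.
  by move/eqP.
have allfix : forall v, v \in <<S>> -> k v = v.
  move=> v /gen_prodgP [m [c cS ->]].
  elim: m c cS => [|m IH] c cS; first by rewrite big_ord0.
  rewrite big_ord_recl closed //; apply: IH => i; exact: cS.
have k_1 : k = 1.
  apply/permP => v; rewrite perm1 allfix // conn inE //.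
by move: ok; rewrite k_1 order1 => q1; move: pq; rewrite -q1.
Qed.


Lemma dih_gens (n : nat) : 1 < n -> exists x y : 'D_(n.*2),
  [/\ <[x]> <*> <[y]> = [set: 'D_(n.*2)], x ^+ n = 1, y ^+ 2 = 1 & x ^ y = x^-1].
Proof.
move=> n1.
have := @isoGrpP _ _ _ _ [set: 'D_(n.*2)]%G (Grp_dihedral n1).
rewrite isog_refl => /(_ isT) [_].
rewrite /Presentation.hom /=.
move/existsP => [[x y]] /= /eqP [e1 e2 e3 e4].
by exists x, y.
Qed.

Lemma dih_struct (n : nat) : 1 < n -> exists C0 : {group 'D_(n.*2)},
  [/\ #|C0| = n, abelian C0,
      forall z c, z \notin C0 -> c \in C0 -> c ^ z = c^-1
    & forall u w, u \notin C0 -> w \notin C0 -> u^-1 * w \in C0].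
Proof.
move=> n1; have [x [y [eG xn y2 xy]]] := dih_gens n1.
have nxy : <[y]> \subset 'N(<[x]>) by rewrite norms_cycle xy groupV cycle_id.
have yN : y \in 'N(<[x]>) by rewrite -cycle_subG.
have eG' : <[x]> * <[y]> = [set: 'D_(n.*2)] by rewrite -norm_joinEr.
have dxn : #[x] %| n by rewrite order_dvdn xn.
have oy : #[y] <= 2 by rewrite dvdn_leq // order_dvdn y2.
have ox : #[x] = n.
  apply/eqP; rewrite eqn_leq dvdn_leq ?(ltnW n1) //=.
  have := mul_cardG <[x]> <[y]>; rewrite eG' card_dihedral //.
  move=> e; rewrite -(@leq_pmul2r 2) // muln2.
  have : (n.*2 * #|<[x]> :&: <[y]>| <= #[x] * 2)%N.
    by rewrite -e -!orderE leq_mul.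
  apply: leq_trans; rewrite leq_pmulr // cardG_gt0.
have yout : forall z, z \notin <[x]> -> exists2 a, a \in <[x]> & z = a * y.
  move=> z nz; have : z \in <[x]> * <[y]> by rewrite eG' inE.
  case/mulsgP => a b xa /cycleP [i ->] ez; exists a => //.
  rewrite ez -(expg_mod _ y2); congr (_ * _).
  move: nz; rewrite ez -(expg_mod _ y2).
  have : i %% 2 < 2 by rewrite ltn_mod.
  case: (i %% 2) => [|[|//]] _; last by rewrite expg1.
  by rewrite expg0 mulg1 xa.
exists <[x]>%G; split => //.
- exact: cycle_abelian.
- move=> z c nz /cycleP [j ->]; have [a xa ->] := yout z nz.
  have ca : x ^+ j ^ a = x ^+ j.
    have cm : commute (x ^+ j) a by apply: (centsP (cycle_abelian x)); rewrite ?mem_cycle.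
    by rewrite conjgE cm mulKg.
  by rewrite conjgM ca conjXg xy expgVn.
- move=> u w nu nw; have [a xa ->] := yout u nu; have [b xb ->] := yout w nw.
  have -> : (a * y)^-1 * (b * y) = (a^-1 * b) ^ y by rewrite conjgE invMg !mulgA.
  by rewrite memJ_norm // groupM ?groupV.
Qed.


Close Scope group_scope.
Unset Implicit Arguments.

Theorem lemma4p2 (n : nat) (S : {set 'D_(n.*2)}) :
  1 < n -> odd n -> (1%g \notin S) ->
  (coprime #|cay_stab S| n -> CI_digraph S) /\
  (cay_connected S -> #|S| < pdiv n -> CI_digraph S).
Proof.
move=> n1 oddn _.
have [C0 [hC0 aC0 hinv hcos]] := dih_struct n1.
have hG : #|[set: 'D_(n.*2)]| = n.*2 by rewrite card_dihedral.
have part1 : coprime #|cay_stab S| n -> CI_digraph S.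
  move=> hcop; apply: babai => c sub.
  exact: (core hC0 oddn aC0 hG hinv hcos hcop sub).
split => // conn lt; apply: part1; apply: conn_coprime => //.
  exact: ltnW.
move=> q pq qn; apply: leq_trans lt _.
by apply: pdiv_min_dvd => //; apply: prime_gt1.
Qed.
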